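(* Let $E$ be a graph with finitely many vertices and $K$ a field of characteristic $0$. Assume $E$ contains a sink $w$ and an edge $f$ with $r(f)=w$. Then $1+2f^*$ and $1+2f$ are units of $L_K(E)$ and $\langle 1+2f^*,\,1+2f\rangle$ is a non-cyclic free subgroup of $L_K(E)^\times$.
   Context: A graph $E=(E^0,E^1,r,s)$; the Leavitt path algebra $L_K(E)$ is the free associative $K$-algebra generated by $E^0\cup E^1\cup\{e^*:e\in E^1\}$ subject to: $vv'=\delta_{v,v'}v$; $s(e)e=er(e)=e$; $r(e)e^*=e^*s(e)=e^*$; $e^*f=\delta_{e,f}r(e)$; $v=\sum_{s(e)=v}ee^*$ for every vertex $v$ emitting a finite nonzero number of edges. With $E^0$ finite, $L_K(E)$ is unital with $1=\sum_{v\in E^0}v$. A sink is a vertex emitting no edges. *)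

(* Defs.v *)
From HB Require Import structures.
From mathcomp Require Import all_boot all_algebra.
Set Implicit Arguments. Unset Strict Implicit. Unset Printing Implicit Defensive.
Import GRing.Theory.
Local Open Scope ring_scope.

(* A "Leavitt E-family" in a (unital, associative)
   K-algebra B consists of images P v (vertices), X e (edges), Y e (ghost
   edges e^* ) satisfying the defining relations of L_K(E); since E0 is
   finite, L_K(E) is unital with 1 = sum_v v, so we include that relation. *)
Definition is_leavitt_family (K : fieldType) (E0 : finType) (E1 : eqType)
    (s r : E1 -> E0) (B : algType K)
    (P : E0 -> B) (X Y : E1 -> B) : Prop :=
  [/\ (forall v v', P v * P v' = if v == v' then P v else 0),
      (forall e, (P (s e) * X e = X e /\ X e * P (r e) = X e)
              /\ (P (r e) * Y e = Y e /\ Y e * P (s e) = Y e)),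
      (forall e f, Y e * X f = if e == f then P (r e) else 0),
      (forall (v : E0) (es : seq E1), uniq es -> es != [::] ->
          (forall e, (s e == v) = (e \in es)) ->
          P v = \sum_(e <- es) X e * Y e)
    & \sum_(v : E0) P v = 1 ].

Definition alg_hom (K : fieldType) (A B : algType K) (phi : A -> B) : Prop :=
  [/\ (forall a b, phi (a + b) = phi a + phi b),
      (forall a b, phi (a * b) = phi a * phi b),
      (forall (k : K) a, phi (k *: a) = k *: phi a)
    & phi 1 = 1 ].

Definition is_leavitt_path_algebra (K : fieldType) (E0 : finType) (E1 : eqType)
    (s r : E1 -> E0) (A : algType K) (P : E0 -> A) (X Y : E1 -> A) : Prop :=
  is_leavitt_family s r P X Y /\
  forall (B : algType K) (PB : E0 -> B) (XB YB : E1 -> B),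
    is_leavitt_family s r PB XB YB ->
    exists phi : A -> B,
      [/\ alg_hom phi,
          (forall v, phi (P v) = PB v),
          (forall e, phi (X e) = XB e),
          (forall e, phi (Y e) = YB e)
        & forall psi : A -> B, alg_hom psi ->
            (forall v, psi (P v) = PB v) ->
            (forall e, psi (X e) = XB e) ->
            (forall e, psi (Y e) = YB e) ->
            psi =1 phi].

Definition is_unit (R : pzRingType) (x : R) : Prop :=
  exists u : R, x * u = 1 /\ u * x = 1.

(* Words in two letters and their inverses: a letter (g, i) is generator
   g (false = first, true = second), inverted iff i. *)
Fixpoint eval_word (R : pzRingType) (x xi y yi : R) (w : seq (bool * bool)) : R :=
  match w with
  | [::] => 1
  | (g, i) :: w' =>
      (if g then (if i then yi else y) else (if i then xi else x))
        * eval_word x xi y yi w'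
  end.

Fixpoint reduced_word (w : seq (bool * bool)) : bool :=
  match w with
  | a :: ((b :: _) as w') => ~~ ((a.1 == b.1) && (a.2 != b.2)) && reduced_word w'
  | _ => true
  end.

Definition free_pair (R : pzRingType) (x y : R) : Prop :=
  exists xi yi : R,
    [/\ x * xi = 1 /\ xi * x = 1, y * yi = 1 /\ yi * y = 1
      & forall w : seq (bool * bool), w != [::] -> reduced_word w ->
          eval_word x xi y yi w != 1].

(* Main.v *)
Require Import Defs.
From HB Require Import structures.
From mathcomp Require Import all_boot all_algebra.
From mathcomp Require Import boolp.
From mathcomp Require Import zify.
Set Implicit Arguments. Unset Strict Implicit. Unset Printing Implicit Defensive.
Import GRing.Theory.
Local Open Scope ring_scope.

Record lin (K : fieldType) (T : Type) (t0 : T) := Lin {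
  app :> (T -> K) -> (T -> K);
  appD : forall g h, app (fun t => g t + h t) = (fun t => app g t + app h t);
  appZ : forall k g, app (fun t => k * g t) = (fun t => k * app g t) }.

Section LinB.
Variables (K : fieldType) (T : Type) (t0 : T).
Local Notation L := (lin K t0).

Lemma lin_eq (m1 m2 : L) : (forall g t, m1 g t = m2 g t) -> m1 = m2.
Proof.
case: m1 m2 => [a1 d1 z1] [a2 d2 z2] /= H.
have ea : a1 = a2 by apply: funext => g; apply: funext => t; apply: H.
subst a2; congr Lin; apply: Prop_irrelevance.
Qed.

HB.instance Definition _ := gen_eqMixin L.
HB.instance Definition _ := gen_choiceMixin L.

Lemma app0 (m : L) : m (fun _ => 0) = (fun _ => 0).
Proof.
have := appZ m 0 (fun _ => 0); rewrite /=.
have -> : (fun _ : T => (0:K) * 0) = (fun _ => 0) by apply: funext => t; rewrite mul0r.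
by move=> ->; apply: funext => t; rewrite mul0r.
Qed.

Lemma appN (m : L) g : m (fun t => - g t) = (fun t => - m g t).
Proof.
have := appZ m (-1) g.
have -> : (fun t => (-1:K) * g t) = (fun t => - g t) by apply: funext => t; rewrite mulN1r.
by move=> ->; apply: funext => t; rewrite mulN1r.
Qed.

Program Definition lzero : L := @Lin K T t0 (fun g t => 0) _ _.
Next Obligation. by apply: funext => t; rewrite addr0. Qed.
Next Obligation. by apply: funext => t; rewrite mulr0. Qed.

Program Definition ladd (m1 m2 : L) : L := @Lin K T t0 (fun g t => m1 g t + m2 g t) _ _.
Next Obligation. by apply: funext => t; rewrite !appD addrACA. Qed.
Next Obligation. by apply: funext => t; rewrite !appZ mulrDr. Qed.

Program Definition lopp (m : L) : L := @Lin K T t0 (fun g t => - m g t) _ _.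
Next Obligation. by apply: funext => t; rewrite !appD opprD. Qed.
Next Obligation. by apply: funext => t; rewrite !appZ mulrN. Qed.

Lemma laddA : associative ladd.
Proof. by move=> a b c; apply: lin_eq => g t /=; rewrite addrA. Qed.
Lemma laddC : commutative ladd.
Proof. by move=> a b; apply: lin_eq => g t /=; rewrite addrC. Qed.
Lemma ladd0 : left_id lzero ladd.
Proof. by move=> a; apply: lin_eq => g t /=; rewrite add0r. Qed.
Lemma laddN : left_inverse lzero lopp ladd.
Proof. by move=> a; apply: lin_eq => g t /=; rewrite addNr. Qed.

HB.instance Definition _ := GRing.isZmodule.Build L laddA laddC ladd0 laddN.

Program Definition lone : L := @Lin K T t0 (fun g => g) _ _.
Program Definition lmul (m1 m2 : L) : L := @Lin K T t0 (fun g => m1 (m2 g)) _ _.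
Next Obligation. by rewrite !appD. Qed.
Next Obligation. by rewrite !appZ. Qed.

Lemma lmulA : associative lmul.
Proof. by move=> a b c; apply: lin_eq. Qed.
Lemma lmul1 : left_id lone lmul.
Proof. by move=> a; apply: lin_eq. Qed.
Lemma lmulr1 : right_id lone lmul.
Proof. by move=> a; apply: lin_eq. Qed.
Lemma lmulDl : left_distributive lmul +%R.
Proof. by move=> a b c; apply: lin_eq. Qed.
Lemma lmulDr : right_distributive lmul +%R.
Proof. by move=> a b c; apply: lin_eq => g t /=; rewrite appD. Qed.
Lemma lone_neq0 : lone != 0.
Proof.
apply/eqP => /(congr1 (fun m : L => app m (fun _ => 1) t0)) /=.
by move/eqP; rewrite oner_eq0.
Qed.

HB.instance Definition _ := GRing.Zmodule_isNzRing.Build L lmulA lmul1 lmulr1 lmulDl lmulDr lone_neq0.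

Program Definition lscale (k : K) (m : L) : L := @Lin K T t0 (fun g t => k * m g t) _ _.
Next Obligation. by apply: funext => t; rewrite !appD mulrDr. Qed.
Next Obligation. by apply: funext => t; rewrite !appZ mulrCA. Qed.

Lemma lscaleA a b (v : L) : lscale a (lscale b v) = lscale (a * b) v.
Proof. by apply: lin_eq => g t /=; rewrite mulrA. Qed.
Lemma lscale1 : left_id 1 lscale.
Proof. by move=> a; apply: lin_eq => g t /=; rewrite mul1r. Qed.
Lemma lscaleDr : right_distributive lscale +%R.
Proof. by move=> a b c; apply: lin_eq => g t /=; rewrite mulrDr. Qed.
Lemma lscaleDl v : {morph lscale^~ v: a b / a + b}.
Proof. by move=> a b; apply: lin_eq => g t /=; rewrite mulrDl. Qed.

HB.instance Definition _ := GRing.Zmodule_isLmodule.Build K L lscaleA lscale1 lscaleDr lscaleDl.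

Lemma lscaleAl (a : K) (u v : L) : a *: (u * v) = (a *: u) * v.
Proof. by apply: lin_eq. Qed.
HB.instance Definition _ := GRing.Lmodule_isLalgebra.Build K L lscaleAl.
Lemma lscaleAr (a : K) (u v : L) : a *: (u * v) = u * (a *: v).
Proof. by apply: lin_eq => g t /=; rewrite appZ. Qed.
HB.instance Definition _ := GRing.Lalgebra_isAlgebra.Build K L lscaleAr.

End LinB.


Section Family.
Variables (K : fieldType) (E0 : finType) (E1 : eqType) (s r : E1 -> E0) (w : E0).
Hypothesis w_sink : forall e : E1, s e != w.

Definition src (p : seq E1) : E0 := if p is e :: _ then s e else w.
Fixpoint valid (p : seq E1) : bool :=
  if p is e :: p' then (r e == src p') && valid p' else true.
Definition TT := {p : seq E1 | valid p}.
Definition tnil : TT := exist _ [::] isT.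
Definition tailT (t : TT) : TT := insubd tnil (behead (val t)).
Definition consT (e : E1) (t : TT) : TT := insubd tnil (e :: val t).
Local Notation L := (lin K tnil).

Lemma tailT_val (t : TT) : sval (tailT t) = behead (sval t).
Proof. by rewrite /tailT insubdK //; case: t => [[|e p]] //= /andP[]. Qed.
Lemma consT_val e (t : TT) : r e == src (sval t) -> sval (consT e t) = e :: sval t.
Proof. by move=> h; rewrite /consT insubdK // unfold_in /= h; case: t h. Qed.

Program Definition PB (u : E0) : L := @Lin K TT tnil
  (fun g t => if src (val t) == u then g t else 0) _ _.
Next Obligation. by apply: funext => t; case: ifP; rewrite ?addr0. Qed.
Next Obligation. by apply: funext => t; case: ifP; rewrite ?mulr0. Qed.

Program Definition XB (e : E1) : L := @Lin K TT tnil
  (fun g t => if ohead (val t) == Some e then g (tailT t) else 0) _ _.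
Next Obligation. by apply: funext => t; case: ifP; rewrite ?addr0. Qed.
Next Obligation. by apply: funext => t; case: ifP; rewrite ?mulr0. Qed.

Program Definition YB (e : E1) : L := @Lin K TT tnil
  (fun g t => if r e == src (val t) then g (consT e t) else 0) _ _.
Next Obligation. by apply: funext => t; case: ifP; rewrite ?addr0. Qed.
Next Obligation. by apply: funext => t; case: ifP; rewrite ?mulr0. Qed.

Lemma app_sum (I : Type) (rr : seq I) (Pr : pred I) (F : I -> L) g t :
  (\sum_(i <- rr | Pr i) F i) g t = \sum_(i <- rr | Pr i) F i g t.
Proof.
elim: rr => [|i rr IH]; first by rewrite !big_nil.
by rewrite !big_cons; case: (Pr i) => //=; rewrite IH.
Qed.

Lemma head_valid (t : TT) e : ohead (sval t) = Some e -> r e == src (behead (sval t)).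
Proof. by case: t => [[|e' p]] //= /andP[h _] [<-]. Qed.

Lemma tail_cons e (t : TT) : r e == src (sval t) -> tailT (consT e t) = t.
Proof. by move=> h; apply: val_inj; change (sval (tailT (consT e t)) = sval t); rewrite tailT_val consT_val. Qed.

Lemma cons_tail e (t : TT) : ohead (sval t) == Some e -> consT e (tailT t) = t.
Proof.
case: t => [[|e' p]] //= vp /eqP[<-]; apply: val_inj; rewrite /=.
have /andP[h _] := vp.
by rewrite consT_val tailT_val.
Qed.

Lemma family : is_leavitt_family s r PB XB YB.
Proof.
split.
- move=> v v'; case: (eqVneq v v') => [<-|ne]; apply: lin_eq => g t /=; rewrite ?eqxx ?(negbTE ne) /=.
    by case: (_ == v).
  by case: (src (sval t) =P v) => // ->; rewrite (negbTE ne).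
- move=> e; split; split; apply: lin_eq => g t /=.
  + case: t => [[|e' p] vp] //=; first by case: ifP.
    case: (Some e' =P Some e) => [[ee]|_]; last by case: ifP.
    by have -> : s e' == s e by rewrite ee.
  + case: (ohead (sval t) =P Some e) => // h; rewrite tailT_val.
    by rewrite eq_sym (head_valid h).
  + case: (src (sval t) =P r e) => [->|ne]; rewrite ?eqxx //; case: eqP => // h; by case: ne.
  + case: ifP => // h; by rewrite consT_val //= eqxx.
- move=> e f; apply: lin_eq => g t /=.
  case: (eqVneq e f) => [<-|ne] /=.
    case: (r e =P src (sval t)) => [h|ne] /=.
      have h' : r e == src (sval t) by rewrite h.
      rewrite consT_val //= eqxx tail_cons //.
      by rewrite -h eqxx.
    case: eqP => // h; case: ne; by rewrite h.
  case: ifP => // h; rewrite consT_val //=; case: eqP => // [[]] ef.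
  by rewrite ef eqxx in ne.
- move=> v es ues nes hes; apply: lin_eq => g t /=; rewrite app_sum /=.
  case ht: (sval t) => [|e' p] /=.
    rewrite big1 //.
    case: (w =P v) => // wv.
    case: es nes ues hes => // e es' _ _ /(_ e); rewrite inE eqxx orTb -wv => h.
    by move: (w_sink e); rewrite h.
  have hv : r e' == src p by have := @head_valid t e'; rewrite ht; apply.
  have ct : consT e' (tailT t) = t by apply: cons_tail; rewrite ht.
  rewrite tailT_val ht /=.
  case: ifP => [/eqP sv|sn].
    rewrite (bigD1_seq e') /= ?eqxx ?hv ?ct //; last by rewrite -hes sv.
    rewrite big1 ?addr0 // => i /negbTE ne.
    case: eqP => // [[ei]]; by rewrite ei eqxx in ne.
  rewrite big1_seq // => i /andP[_ ii]; case: eqP => // [[ei]].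
  by move: ii; rewrite -ei -hes sn.
- apply: lin_eq => g t /=; rewrite app_sum /=.
  rewrite (bigD1 (src (val t))) //= eqxx big1 ?addr0 // => i /negbTE.
  by rewrite eq_sym => ->.
Qed.

Lemma PBw_neq0 : PB w != 0.
Proof.
apply/eqP => /(congr1 (fun m : L => m (fun _ => 1) tnil)) /= .
by rewrite eqxx => /eqP; rewrite oner_eq0.
Qed.

End Family.
Definition eps (i : bool) : int := if i then -1 else 1.
Definition step (l : bool * bool) (v : int * int) : int * int :=
  if l.1 then (v.1 + eps l.2 * 2 * v.2, v.2) else (v.1, v.2 + eps l.2 * 2 * v.1).
Fixpoint act (ws : seq (bool * bool)) (v : int * int) : int * int :=
  if ws is l :: ws' then step l (act ws' v) else v.
Definition Pre (g : bool) (v : int * int) : bool :=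
  if g then v.1 * v.1 < v.2 * v.2 else v.2 * v.2 < v.1 * v.1.
Definition Inv (l : bool * bool) (v : int * int) : bool :=
  Pre (~~ l.1) v && (0 < eps l.2 * v.1 * v.2).

Lemma pre_step l v : Pre l.1 v -> Inv l (step l v).
Proof.
case: l v => [[] []] [X Y]; rewrite /Inv /Pre /step /eps /=; move=> h; apply/andP; split; nia.
Qed.

Lemma inv_step l h v : Inv h v -> ~~ ((l.1 == h.1) && (l.2 != h.2)) -> Inv l (step l v).
Proof.
case: l h v => [[] []] [[] []] [X Y]; rewrite /Inv /Pre /step /eps /= => /andP[h1 h2] //= _;
  apply/andP; split; nia.
Qed.

Lemma pingpong ws l : reduced_word (l :: ws) -> forall v, Pre (last l ws).1 v -> Inv l (act (l :: ws) v).
Proof.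
elim: ws l => [|l' ws IH] l; first by move=> _ v; exact: pre_step.
case/andP => c rw v hv; exact: (@inv_step l l' _ (IH _ rw v hv) c).
Qed.

Section Col.
Variables (R : pzRingType) (a b c1 c2 : R).
Hypotheses (bc1 : b * c1 = c2) (bc2 : b * c2 = 0) (ac1 : a * c1 = 0) (ac2 : a * c2 = c1).
Definition vec (v : int * int) := c1 *~ v.1 + c2 *~ v.2.

Lemma col ws v : eval_word (1 + 2%:R * b) (1 - 2%:R * b) (1 + 2%:R * a) (1 - 2%:R * a) ws * vec v
  = vec (act ws v).
Proof.
elim: ws => [|[g i] ws IH] /=; first by rewrite mul1r.
rewrite -mulrA IH; case: (act ws v) => X Y.
rewrite /vec /step /eps /=.
case: g; case: i => /=;
  rewrite ?mulrDl ?mulrBl !mul1r ?mulrDr ?mulrBr !mulrzAr ?mulNr ?mulrDl ?bc1 ?bc2 ?ac1 ?ac2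
    ?addr0 ?oppr0 ?mul0rz ?addr0 ?mulNrz -?mulrNz ?mulrzDl.
all: rewrite ?add0r -!mulrzDr.
- rewrite addrAC -mulrzDr; congr (_ *~ _ + _); lia.
- rewrite addrAC -mulrzDr; congr (_ *~ _ + _); lia.
- rewrite -addrA -mulrzDr; congr (_ + _ *~ _); lia.
- rewrite -addrA -mulrzDr; congr (_ + _ *~ _); lia.
Qed.
End Col.
Lemma intK0 (K : fieldType) (charK0 : [pchar K] =i pred0) (z : int) : (z%:~R : K) = 0 -> z = 0.
Proof.
have hc := (pcharf0P K).1 charK0.
case: z => n /eqP.
  by rewrite -pmulrn hc => /eqP ->.
by rewrite NegzE mulrNz oppr_eq0 -pmulrn hc.
Qed.
Lemma zsc_eq0 (K : fieldType) (charK0 : [pchar K] =i pred0) (A : lmodType K) (x : A) (z : int) :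
  x != 0 -> x *~ z = 0 -> z = 0.
Proof.
move=> nz; rewrite -scaler_int => /eqP; rewrite scaler_eq0 (negbTE nz) orbF => /eqP.
exact: intK0.
Qed.

Lemma unit_sq (R : pzRingType) (u : R) : u * u = 0 ->
  (1 + 2%:R * u) * (1 - 2%:R * u) = 1 /\ (1 - 2%:R * u) * (1 + 2%:R * u) = 1.
Proof.
move=> uu; rewrite !mulr_natl.
have h : (u *+ 2) * (u *+ 2) = 0 by rewrite mulrnAl mulrnAr uu !mul0rn.
split.
  by rewrite mulrDl mul1r mulrBr mulr1 h subr0 subrK.
by rewrite mulrBl mul1r mulrDr mulr1 h addr0 addrK.
Qed.

Unset Implicit Arguments.

Theorem lemma4p3 (K : fieldType) (charK0 : [pchar K] =i pred0)
  (E0 : finType) (E1 : eqType) (s r : E1 -> E0)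
  (A : algType K) (P : E0 -> A) (X Y : E1 -> A)
  (HA : is_leavitt_path_algebra s r P X Y)
  (w : E0) (w_sink : forall e : E1, s e != w)
  (f : E1) (hf : r f = w) :
  [/\ is_unit (1 + 2%:R * Y f), is_unit (1 + 2%:R * X f)
    & free_pair (1 + 2%:R * Y f) (1 + 2%:R * X f)].
Proof.
have hsw : s f != w := w_sink f.
case: HA => [[H1 H2 H3 H4 H5] HU].
have [[sa ar] [rb bs]] := H2 f; rewrite hf in ar rb.
have ba : Y f * X f = P w by rewrite H3 eqxx hf.
have Psw : P (s f) * P w = 0 by rewrite H1 (negbTE hsw).
have Pws : P w * P (s f) = 0 by rewrite H1 eq_sym (negbTE hsw).
have aa : X f * X f = 0.
  by rewrite -[X in X * _]ar -[X in _ * X]sa mulrA -(mulrA (X f)) Pws mulr0 mul0r.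
have bb : Y f * Y f = 0.
  by rewrite -[X in X * _]bs -[X in _ * X]rb mulrA -(mulrA (Y f)) Psw mulr0 mul0r.
have bw : Y f * P w = 0 by rewrite -[X in X * _]bs -mulrA Psw mulr0.
have bq : Y f * (X f * Y f) = Y f by rewrite mulrA ba rb.
have aq : X f * (X f * Y f) = 0 by rewrite mulrA aa mul0r.
have Pw0 : P w != 0.
  have [phi [[phiD _ _ _] phiP _ _ _]] := HU _ _ _ _ (@family K E0 E1 s r w w_sink).
  apply/eqP => Pw0; move: (@PBw_neq0 K E0 E1 s r w); rewrite -phiP Pw0.
  have h := phiD 0 0; rewrite addr0 in h.
  have : phi 0 + 0 = phi 0 + phi 0 by rewrite addr0.
  by move/addrI => <-; rewrite eqxx.
have [ub1 ub2] := unit_sq bb.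
have [ua1 ua2] := unit_sq aa.
split; [by exists (1 - 2%:R * Y f) | by exists (1 - 2%:R * X f) |].
exists (1 - 2%:R * Y f), (1 - 2%:R * X f); split => // ws.
case: ws => // l ws' _ rw; apply/negP => /eqP e1.
have pp := pingpong rw.
case hg: (last l ws').1.
- have hc := col ba bw aa ar (l :: ws') (0, 1).
  have hp : Inv l (act (l :: ws') (0, 1)) by apply: pp; rewrite hg.
  move: hc hp; move: (act (l :: ws') (0, 1)) => [x y].
  rewrite e1 mul1r /vec /= mulr0z add0r mulr1z => h /andP[_ hI].
  have := congr1 (fun z => Y f * z) h; rewrite /= mulrDr !mulrzAr ba bw mul0rz addr0.
  move/esym/(zsc_eq0 charK0 Pw0) => x0.
  by move: hI; rewrite x0 mulr0 mul0r.
- have hc := col bq bb aq (erefl (X f * Y f)) (l :: ws') (1, 0).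
  have hp : Inv l (act (l :: ws') (1, 0)) by apply: pp; rewrite hg.
  move: hc hp; move: (act (l :: ws') (1, 0)) => [x y].
  rewrite e1 mul1r /vec /= mulr0z addr0 mulr1z => h /andP[_ hI].
  have qa : X f * Y f * X f = X f by rewrite -mulrA ba ar.
  have := congr1 (fun z => z * X f) h; rewrite /= mulrDl !mulrzAl qa ba => h2.
  have := congr1 (fun z => Y f * z) h2; rewrite /= mulrDr !mulrzAr ba bw mul0rz addr0.
  move=> h3.
  have x1 : x = 1.
    have : P w *~ (x - 1) = 0 by rewrite mulrzBr mulr1z -h3 subrr.
    by move/(zsc_eq0 charK0 Pw0)/eqP; rewrite subr_eq0 => /eqP.
  move: h2; rewrite x1 mulr1z => h4.
  have : P w *~ y = 0 by rewrite -[LHS](addKr (X f)) -h4 addNr.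
  move/(zsc_eq0 charK0 Pw0) => y0.
  by move: hI; rewrite y0 mulr0.
Qed.
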